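(* Let $m,n\in\mathbb N$, $a\in\mathbb C\setminus\mathbb Z$, $b_1,\dots,b_m\in\mathbb C$, $c_1,\dots,c_m\in\mathbb C\setminus\{0,-1,-2,\dots\}$. Then, as an identity of formal power series in $x=(x_1,\dots,x_m)$, $y=(y_1,\dots,y_n)$, $$\mathrm H_A^{(m,n)}(a,b;c;x,y)=F_A^{(m)}(a,b;c;x)\,J^{(n)}_{-a}(y)+\sum_{k=1}^\infty\sum_{l=1}^k\sum_{\substack{i\in\mathbb Z_{\ge0}^m,\ |i|=k\\ j\in\mathbb Z_{\ge0}^n,\ |j|=l}}\frac{(-1)^{k+l}\,k!\,(k-1)!\,(b)_i}{(l-1)!\,(k-l)!\,(1-a)_l\,(c)_i}\,\frac{x^i}{i!}\frac{y^j}{j!}\,F_A^{(m)}(a+k,b+i;c+i;x)\,J^{(n)}_{-a+l}(y),$$ where $F_A^{(m)}(a+k,b+i;c+i;x)$ means $F_A^{(m)}(a+k,b_1+i_1,\dots,b_m+i_m;c_1+i_1,\dots,c_m+i_m;x)$.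
   Context: Multi-index notation: for $i=(i_1,\dots,i_m)\in\mathbb Z_{\ge0}^m$, $x^i=x_1^{i_1}\cdots x_m^{i_m}$, $i!=i_1!\cdots i_m!$, $|i|=i_1+\dots+i_m$; similarly for $j\in\mathbb Z_{\ge0}^n$ and $y$. Pochhammer symbol $(\lambda)_k=\Gamma(\lambda+k)/\Gamma(\lambda)$ for every integer $k$; $(b)_i:=\prod_{s=1}^m(b_s)_{i_s}$, $(c)_i:=\prod_{s=1}^m(c_s)_{i_s}$. Lauricella function $F_A^{(m)}(a,b;c;x)=F_A^{(m)}(a,b_1,\dots,b_m;c_1,\dots,c_m;x)=\sum_{i\in\mathbb Z_{\ge0}^m}\frac{(a)_{|i|}(b)_i}{(c)_i}\frac{x^i}{i!}$. Bessel function of $n$ variables $J^{(n)}_\alpha(y)=\sum_{j\in\mathbb Z_{\ge0}^n}\frac{(-1)^{|j|}}{(1+\alpha)_{|j|}}\frac{y^j}{j!}$. Confluent function $\mathrm H_A^{(m,n)}(a,b;c;x,y)=\sum_{i\in\mathbb Z_{\ge0}^m,\,j\in\mathbb Z_{\ge0}^n}\frac{(a)_{|i|-|j|}(b)_i}{(c)_i}\frac{x^i}{i!}\frac{y^j}{j!}$. All functions are regarded as formal power series; the infinite sum converges in the formal (degree) topology. *)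

(* Defs.v *)
(* Formal power series in x = (x_1..x_m), y = (y_1..y_n)
   with coefficients in a numeric algebraically closed field C (model of ℂ),
   represented by their coefficient functions. *)
From HB Require Import structures.
From mathcomp Require Import all_boot all_order all_algebra.
Set Implicit Arguments. Unset Strict Implicit. Unset Printing Implicit Defensive.
Import Order.TTheory GRing.Theory Num.Theory.
Local Open Scope ring_scope.

Definition midx (m : nat) := {ffun 'I_m -> nat}.

Definition mdeg m (i : midx m) : nat := (\sum_(s < m) i s)%N.

Definition mfact (C : numClosedFieldType) m (i : midx m) : C :=
  \prod_(s < m) ((i s)`!)%:R.

(* Pochhammer symbol (λ)_k for every integer k:
   (λ)_k = λ(λ+1)...(λ+k-1) for k >= 0, (λ)_{-k} = 1/((λ-1)...(λ-k)) *)
Definition poch (C : numClosedFieldType) (x : C) (k : int) : C :=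
  match k with
  | Posz n => \prod_(t < n) (x + t%:R)
  | Negz n => (\prod_(t < n.+1) (x - (t.+1)%:R))^-1
  end.

Definition mpoch (C : numClosedFieldType) m (b : 'I_m -> C) (i : midx m) : C :=
  \prod_(s < m) poch (b s) (Posz (i s)).

Definition fps (C : numClosedFieldType) m n := midx m -> midx n -> C.

Definition of_bounded m N (p : {ffun 'I_m -> 'I_N}) : midx m :=
  [ffun s => nat_of_ord (p s)].

Definition msub m (i p : midx m) : midx m := [ffun s => (i s - p s)%N].

Definition fps_mul (C : numClosedFieldType) m n (f g : fps C m n) : fps C m n :=
  fun I J =>
    \sum_(p : {ffun 'I_m -> 'I_(mdeg I).+1} | [forall s, (p s <= I s)%N])
      \sum_(q : {ffun 'I_n -> 'I_(mdeg J).+1} | [forall s, (q s <= J s)%N])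
        f (of_bounded p) (of_bounded q) *
        g (msub I (of_bounded p)) (msub J (of_bounded q)).

Definition fps_add (C : numClosedFieldType) m n (f g : fps C m n) : fps C m n :=
  fun I J => f I J + g I J.

(* convergence of sum_{k>=0} u k to s in the formal (degree) topology:
   every coefficient of the partial sums is eventually constant equal to
   the corresponding coefficient of s *)
Definition fps_hasSum (C : numClosedFieldType) m n (u : nat -> fps C m n)
  (s : fps C m n) : Prop :=
  forall I J, exists K, forall N, (K <= N)%N ->
    \sum_(k < N) u k I J = s I J.

Definition fps_mono (C : numClosedFieldType) m n (i : midx m) (j : midx n)
  : fps C m n := fun I J => if (I == i) && (J == j) then 1 else 0.

Definition mzero m : midx m := [ffun => 0%N].

Definition FA (C : numClosedFieldType) m n (a : C) (b c : 'I_m -> C)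
  : fps C m n := fun I J =>
  if J == mzero n then
    poch a (Posz (mdeg I)) * mpoch b I / mpoch c I / mfact C I
  else 0.

Definition BesselJ (C : numClosedFieldType) m n (alpha : C) : fps C m n :=
  fun I J =>
  if I == mzero m then
    (-1) ^+ (mdeg J) / poch (1 + alpha) (Posz (mdeg J)) / mfact C J
  else 0.

Definition HA (C : numClosedFieldType) m n (a : C) (b c : 'I_m -> C)
  : fps C m n := fun I J =>
  poch a (Posz (mdeg I) - Posz (mdeg J)) * mpoch b I / mpoch c I
    / mfact C I / mfact C J.

(* k-th term (k >= 1) of the outer sum on the right-hand side:
   sum_{l=1}^k sum_{|i|=k, |j|=l} coef * x^i/i! * y^j/j! *
      F_A(a+k, b+i; c+i; x) * J_{-a+l}(y) *)
Definition rhs_term (C : numClosedFieldType) m n (a : C) (b c : 'I_m -> C)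
  (k : nat) : fps C m n := fun I J =>
  \sum_(l0 < k)
   let l := l0.+1 in
   \sum_(ib : {ffun 'I_m -> 'I_k.+1} | mdeg (of_bounded ib) == k)
    let i := of_bounded ib in
    \sum_(jb : {ffun 'I_n -> 'I_l.+1} | mdeg (of_bounded jb) == l)
     let j := of_bounded jb in
     ((-1) ^+ (k + l) * (k`!)%:R * ((k.-1)`!)%:R * mpoch b i
       / (((l.-1)`!)%:R * ((k - l)`!)%:R * poch (1 - a) (Posz l) * mpoch c i)
       / mfact C i / mfact C j) *
     fps_mul (fps_mul (@fps_mono C m n i j)
                      (@FA C m n (a + k%:R) (fun s => b s + (i s)%:R)
                                       (fun s => c s + (i s)%:R)))
             (@BesselJ C m n (- a + l%:R)) I J.

(* Main.v *)
Require Import Defs.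
From HB Require Import structures.
From mathcomp Require Import all_boot all_order all_algebra.
From mathcomp Require Import ring lra zify.
From Stdlib Require Import FunctionalExtensionality.
Set Implicit Arguments. Unset Strict Implicit. Unset Printing Implicit Defensive.
Import Order.TTheory GRing.Theory Num.Theory.
Local Open Scope ring_scope.

Definition le_midx m (x y : midx m) : bool := [forall s, (x s <= y s)%N].

Lemma ob_inj m K : injective (@of_bounded m K).
Proof.
move=> p q E; apply/ffunP=> s; apply/val_inj.
by have := congr1 (fun f : midx m => f s) E; rewrite !ffunE.
Qed.

Definition blist m K (P : pred (midx m)) : seq (midx m) :=
  [seq of_bounded p | p <- enum [pred p : {ffun 'I_m -> 'I_K.+1} | P (of_bounded p)]].

Lemma bsum_list (C : numClosedFieldType) m K (P : pred (midx m)) (F : midx m -> C) :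
  \sum_(p : {ffun 'I_m -> 'I_K.+1} | P (of_bounded p)) F (of_bounded p)
  = \sum_(x <- blist K P) F x.
Proof. by rewrite /blist big_map big_enum. Qed.

Lemma blist_uniq m K P : uniq (@blist m K P).
Proof. by rewrite map_inj_uniq ?enum_uniq //; apply: ob_inj. Qed.

Lemma mem_blist m K P x :
  (x \in @blist m K P) = P x && [forall s, (x s <= K)%N].
Proof.
apply/idP/idP.
  case/mapP=> p; rewrite mem_enum inE => Pp ->; rewrite Pp /=.
  by apply/forallP=> s; rewrite ffunE -ltnS ltn_ord.
case/andP=> Px /forallP Hx.
apply/mapP; exists [ffun s => inord (x s) : 'I_K.+1].
  rewrite mem_enum inE; suff -> : of_bounded [ffun s => inord (x s) : 'I_K.+1] = x by [].
  by apply/ffunP=> s; rewrite !ffunE inordK // ltnS.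
by apply/ffunP=> s; rewrite !ffunE inordK // ltnS.
Qed.

Lemma bsum_reindex (C : numClosedFieldType) m K K' (P : pred (midx m)) (F : midx m -> C) :
  (forall x, P x -> forall s, (x s <= K)%N /\ (x s <= K')%N) ->
  \sum_(p : {ffun 'I_m -> 'I_K.+1} | P (of_bounded p)) F (of_bounded p)
  = \sum_(p : {ffun 'I_m -> 'I_K'.+1} | P (of_bounded p)) F (of_bounded p).
Proof.
move=> HP; rewrite !bsum_list; apply: perm_big; apply: uniq_perm; rewrite ?blist_uniq //.
move=> x; rewrite !mem_blist; case Px: (P x) => //=.
by apply/idP/idP=> _; apply/forallP=> s; case: (HP x Px s).
Qed.

Lemma bsum_delta (C : numClosedFieldType) m K (P : pred (midx m)) (F : midx m -> C) x0 :
  (forall x, P x -> forall s, (x s <= K)%N) ->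
  (forall x, P x -> x != x0 -> F x = 0) ->
  \sum_(p : {ffun 'I_m -> 'I_K.+1} | P (of_bounded p)) F (of_bounded p)
  = if P x0 then F x0 else 0.
Proof.
move=> HB HF; rewrite bsum_list.
case Px0: (P x0).
  have x0in : x0 \in blist K P by rewrite mem_blist Px0; apply/forallP => s; apply: HB.
  rewrite (bigD1_seq x0) ?blist_uniq //= big1_seq ?addr0 // => x /andP[nx].
  by rewrite mem_blist => /andP[Px _]; apply: HF.
rewrite big1_seq // => x /andP[_]; rewrite mem_blist => /andP[Px _]; apply: (HF x Px).
by apply/negP => /eqP E; move: Px; rewrite E Px0.
Qed.
Lemma mulE (C : numClosedFieldType) m n (f g : fps C m n) I J :
  fps_mul f g I J =
  \sum_(p : {ffun 'I_m -> 'I_(mdeg I).+1} | le_midx (of_bounded p) I)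
   \sum_(q : {ffun 'I_n -> 'I_(mdeg J).+1} | le_midx (of_bounded q) J)
     f (of_bounded p) (of_bounded q) *
     g (msub I (of_bounded p)) (msub J (of_bounded q)).
Proof.
rewrite /fps_mul; apply: eq_big => [p|p _].
  by apply: eq_forallb => s; rewrite ffunE.
by apply: eq_bigl => q; apply: eq_forallb => s; rewrite ffunE.
Qed.

Lemma le_mdeg m (x I : midx m) : le_midx x I -> forall s, (x s <= mdeg I)%N.
Proof.
move=> /forallP H s; apply: leq_trans (H s) _.
by rewrite /mdeg (bigD1 s) //= leq_addr.
Qed.

Lemma msub_eq0 m (j q : midx m) : le_midx j q -> (msub q j == mzero m) = (q == j).
Proof.
move=> /forallP H; apply/eqP/eqP => [E|->].
  apply/ffunP => s; have := congr1 (fun f : midx m => f s) E.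
  rewrite !ffunE => /eqP; rewrite subn_eq0 => le; apply/eqP; rewrite eqn_leq le H.
  by [].
by apply/ffunP => s; rewrite !ffunE subnn.
Qed.

Lemma msubnn m (j : midx m) : msub j j = mzero m.
Proof. by apply/ffunP => s; rewrite !ffunE subnn. Qed.

Lemma msub0 m (j : midx m) : msub j (mzero m) = j.
Proof. by apply/ffunP => s; rewrite !ffunE subn0. Qed.

Lemma le_mzero m (j : midx m) : le_midx (mzero m) j.
Proof. by apply/forallP => s; rewrite ffunE. Qed.

Lemma le_refl m (j : midx m) : le_midx j j.
Proof. by apply/forallP => s. Qed.

Lemma mul_mono (C : numClosedFieldType) m n (g : fps C m n) i j P Q :
  fps_mul (@fps_mono C m n i j) g P Q =
  if le_midx i P && le_midx j Q then g (msub P i) (msub Q j) else 0.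
Proof.
rewrite mulE.
rewrite (eq_bigr (fun p : {ffun 'I_m -> 'I_(mdeg P).+1} =>
   if le_midx j Q then @fps_mono C m n i j (of_bounded p) j * g (msub P (of_bounded p)) (msub Q j) else 0)); last first.
  move=> p _.
  have := bsum_delta (K := mdeg Q) (P := fun q => le_midx q Q)
   (F := fun q => @fps_mono C m n i j (of_bounded p) q * g (msub P (of_bounded p)) (msub Q q)) (x0 := j).
  apply; first by move=> x; apply: le_mdeg.
  by move=> x _ nx; rewrite /fps_mono (negbTE nx) andbF mul0r.
have := bsum_delta (K := mdeg P) (P := fun p => le_midx p P)
   (F := fun p => if le_midx j Q then @fps_mono C m n i j p j * g (msub P p) (msub Q j) else 0) (x0 := i).
move=> ->; first by rewrite /fps_mono !eqxx /=; case: (le_midx i P); case: (le_midx j Q); rewrite ?mul1r.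
  by move=> x; apply: le_mdeg.
by move=> x _ nx; rewrite /fps_mono (negbTE nx) /= mul0r; case: ifP.
Qed.
Lemma mul_supp (C : numClosedFieldType) m n (F B : fps C m n) q0 I J :
  (forall p q, q != q0 -> F p q = 0) ->
  (forall p q, p != mzero m -> B p q = 0) ->
  fps_mul F B I J = if le_midx q0 J then F I q0 * B (mzero m) (msub J q0) else 0.
Proof.
move=> HF HB; rewrite mulE.
rewrite (eq_bigr (fun p : {ffun 'I_m -> 'I_(mdeg I).+1} =>
   if le_midx q0 J then F (of_bounded p) q0 * B (msub I (of_bounded p)) (msub J q0) else 0)); last first.
  move=> p _.
  have := bsum_delta (K := mdeg J) (P := fun q => le_midx q J)
   (F := fun q => F (of_bounded p) q * B (msub I (of_bounded p)) (msub J q)) (x0 := q0).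
  apply; first by move=> x; apply: le_mdeg.
  by move=> x _ nx; rewrite HF // mul0r.
have := bsum_delta (K := mdeg I) (P := fun p => le_midx p I)
   (F := fun p => if le_midx q0 J then F p q0 * B (msub I p) (msub J q0) else 0) (x0 := I).
move=> ->; first by rewrite le_refl msubnn.
  by move=> x; apply: le_mdeg.
move=> x lx nx; case: ifP => // _.
have -> : B (msub I x) (msub J q0) = 0 by apply: HB; rewrite (msub_eq0 lx) eq_sym.
by rewrite mulr0.
Qed.

Lemma FA_supp (C : numClosedFieldType) m n a b c p q :
  q != mzero n -> @FA C m n a b c p q = 0.
Proof. by rewrite /FA => /negbTE ->. Qed.

Lemma BJ_supp (C : numClosedFieldType) m n al p q :
  p != mzero m -> @BesselJ C m n al p q = 0.
Proof. by rewrite /BesselJ => /negbTE ->. Qed.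

Lemma FJ_coef (C : numClosedFieldType) m n a b c I J :
  fps_mul (@FA C m n a b c) (@BesselJ C m n (- a)) I J =
  (poch a (Posz (mdeg I)) * mpoch b I / mpoch c I / mfact C I) *
  ((-1) ^+ (mdeg J) / poch (1 - a) (Posz (mdeg J)) / mfact C J).
Proof.
rewrite (mul_supp (q0 := mzero n)); last 2 first.
- by move=> p q; apply: FA_supp.
- by move=> p q; apply: BJ_supp.
by rewrite le_mzero msub0 /FA /BesselJ !eqxx.
Qed.

Lemma term_coef (C : numClosedFieldType) m n (a' a'' : C) b' c' i j I J :
  fps_mul (fps_mul (@fps_mono C m n i j) (@FA C m n a' b' c')) (@BesselJ C m n a'') I J =
  if le_midx i I && le_midx j J then
    (poch a' (Posz (mdeg (msub I i))) * mpoch b' (msub I i) / mpoch c' (msub I i)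
      / mfact C (msub I i)) *
    ((-1) ^+ (mdeg (msub J j)) / poch (1 + a'') (Posz (mdeg (msub J j))) / mfact C (msub J j))
  else 0.
Proof.
rewrite (mul_supp (q0 := j)); last 2 first.
- move=> p q nq; rewrite mul_mono; case: ifP => // /andP[_ jq].
  by apply: FA_supp; rewrite msub_eq0.
- by move=> p q; apply: BJ_supp.
rewrite mul_mono msubnn le_refl andbT.
case: (le_midx j J); rewrite ?andbF ?andbT //.
case: (le_midx i I); rewrite ?mul0r // /FA /BesselJ !eqxx; reflexivity.
Qed.
Lemma poch_add (C : numClosedFieldType) (x : C) p q :
  poch x (Posz (p + q)) = poch x (Posz p) * poch (x + p%:R) (Posz q).
Proof.
rewrite /=; elim: q => [|q IH]; first by rewrite addn0 big_ord0 mulr1.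
by rewrite addnS !big_ord_recr /= IH mulrA natrD addrA.
Qed.

Lemma mdeg_msub m (i I : midx m) : le_midx i I -> mdeg (msub I i) = (mdeg I - mdeg i)%N.
Proof.
move=> /forallP H; apply/eqP; rewrite -(eqn_add2r (mdeg i)) subnK; last first.
  by apply: leq_sum => s _; apply: H.
rewrite /mdeg -big_split /=; apply/eqP; apply: eq_bigr => s _.
by rewrite ffunE subnK.
Qed.

Lemma le_mdeg_sum m (i I : midx m) : le_midx i I -> (mdeg i <= mdeg I)%N.
Proof. by move=> /forallP H; apply: leq_sum => s _; apply: H. Qed.

Lemma mpoch_split (C : numClosedFieldType) m (b : 'I_m -> C) (i I : midx m) :
  le_midx i I ->
  mpoch b I = mpoch b i * mpoch (fun s => b s + (i s)%:R) (msub I i).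
Proof.
move=> /forallP H; rewrite /mpoch -big_split /=; apply: eq_bigr => s _.
by rewrite ffunE -poch_add subnKC.
Qed.

Lemma fact_neq0 (C : numClosedFieldType) k : ((k`!)%:R : C) != 0.
Proof. by rewrite pnatr_eq0 -lt0n fact_gt0. Qed.

Lemma mfact_split (C : numClosedFieldType) m (i I : midx m) :
  le_midx i I ->
  (mfact C i)^-1 * (mfact C (msub I i))^-1 = (\prod_(s < m) ('C(I s, i s))%:R) / mfact C I.
Proof.
move=> /forallP H; rewrite /mfact -!prodfV -!big_split /=; apply: eq_bigr => s _.
rewrite ffunE; have := bin_fact (H s) => E.
rewrite -E !natrM; have h1 := fact_neq0 C (i s); have h2 := fact_neq0 C (I s - i s).
have h3 : ('C(I s, i s))%:R != 0 :> C.
  by rewrite pnatr_eq0 -lt0n bin_gt0 H.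
field. by rewrite h1 h2 h3.
Qed.
Lemma mdeg_ob m K (f : {ffun 'I_m -> 'I_K}) : mdeg (of_bounded f) = (\sum_(s < m) f s)%N.
Proof. by apply: eq_bigr => s _; rewrite ffunE. Qed.

Lemma coef_binom (C : numClosedFieldType) N k :
  ((('X + 1 : {poly C}) ^+ N)`_k) = ('C(N, k))%:R.
Proof.
rewrite exprD1n coef_sum.
rewrite (eq_bigr (fun t : 'I_N.+1 => if (t == k :> nat) then ('C(N, k))%:R else 0)); last first.
  move=> t _; rewrite coefMn coefXn eq_sym; case: eqP => [->|_]; first by rewrite mulr1n.
  by rewrite mul0rn.
rewrite -big_mkcond /=.
case: (ltnP k N.+1) => hk.
  by rewrite (big_pred1 (Ordinal hk)) // => t; rewrite -val_eqE.
rewrite big_pred0; last by move=> t; apply/eqP => E; move: (ltn_ord t); rewrite E ltnNge hk.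
by rewrite bin_small.
Qed.

Lemma sum_prod_bin (C : numClosedFieldType) m (I : midx m) k :
  \sum_(f : {ffun 'I_m -> 'I_(mdeg I).+1} | mdeg (of_bounded f) == k)
     \prod_(s < m) (('C(I s, f s))%:R : C) = ('C(mdeg I, k))%:R.
Proof.
set N := mdeg I.
pose Pl : {poly C} := \prod_(s < m) \sum_(t < N.+1) ('C(I s, t))%:R *: 'X^t.
have E1 : Pl = ('X + 1) ^+ N.
  rewrite /Pl; transitivity (\prod_(s < m) ('X + 1 : {poly C}) ^+ (I s)); last by rewrite prodrXr.
  apply: eq_bigr => s _.
  rewrite exprD1n (big_ord_widen N.+1 (fun t => 'X^t *+ 'C(I s, t))); last first.
    by rewrite ltnS; apply: (le_mdeg (le_refl I)).
  rewrite [RHS]big_mkcond /=; apply: eq_bigr => t _.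
  rewrite scaler_nat; case: ifP => // ht.
  by rewrite bin_small ?mulr0n // ltnNge -ltnS ht.
have E2 : Pl = \sum_(f : {ffun 'I_m -> 'I_N.+1})
     ((\prod_(s < m) (('C(I s, f s))%:R : C)) *: 'X^(mdeg (of_bounded f))).
  rewrite /Pl bigA_distr_bigA /=; apply: eq_bigr => f _.
  rewrite mdeg_ob -prodrXr -mul_polyC rmorph_prod -big_split /=.
  by apply: eq_bigr => s _; rewrite mul_polyC.
have := congr1 (fun p : {poly C} => p`_k) (etrans (esym E1) E2).
rewrite /= coef_binom coef_sum => ->.
rewrite big_mkcond /=; apply: eq_bigr => f _.
by rewrite coefZ coefXn eq_sym; case: eqP => _; rewrite ?mulr1 ?mulr0.
Qed.

Lemma mvander (C : numClosedFieldType) m (I : midx m) k :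
  \sum_(p : {ffun 'I_m -> 'I_k.+1} | mdeg (of_bounded p) == k)
    (if le_midx (of_bounded p) I then
       (mfact C (of_bounded p))^-1 * (mfact C (msub I (of_bounded p)))^-1 else 0)
  = ('C(mdeg I, k))%:R / mfact C I.
Proof.
rewrite -big_mkcondr /=.
rewrite (eq_bigr (fun p => (\prod_(s < m) (('C(I s, of_bounded p s))%:R : C)) / mfact C I)); last first.
  by move=> p /andP[_ h]; rewrite mfact_split.
rewrite -big_distrl /=; congr (_ * _).
have := @bsum_reindex C m k (mdeg I)
   (fun x => (mdeg x == k) && le_midx x I)
   (fun x => \prod_(s < m) (('C(I s, x s))%:R : C)).
move=> ->; last first.
  move=> x /andP[/eqP hk hl] s; split; last by apply: le_mdeg.
  by rewrite -hk /mdeg (bigD1 s) //= leq_addr.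
rewrite -(sum_prod_bin C I k) big_mkcondr /=; apply: eq_bigr => f _.
have -> : \prod_(s < m) (('C(I s, of_bounded f s))%:R : C) = \prod_(s < m) ('C(I s, f s))%:R.
  by apply: eq_bigr => s _; rewrite ffunE.
case: ifP => // /forallP hn.
have [s hs] : exists s, ~~ (of_bounded f s <= I s)%N.
  by apply/existsP; rewrite -negb_forall; apply/negP => /forallP h; apply: hn.
by rewrite (bigD1 s) //= bin_small ?mul0r // ltnNge -(ffunE (fun s => nat_of_ord (f s))).
Qed.
Definition rp (C : numClosedFieldType) (x : C) n : C := \prod_(t < n) (x + t%:R).

Lemma rp_Sl (C : numClosedFieldType) (x : C) n : rp x n.+1 = x * rp (x + 1) n.
Proof.
rewrite /rp big_ord_recl /= addr0; congr (_ * _); apply: eq_bigr => t _.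
by rewrite /bump /= add1n -addn1 natrD; ring.
Qed.

Lemma rp0 (C : numClosedFieldType) (x : C) : rp x 0 = 1.
Proof. by rewrite /rp big_ord0. Qed.

Lemma rp_Sr (C : numClosedFieldType) (x : C) n : rp x n.+1 = rp x n * (x + n%:R).
Proof. by rewrite /rp big_ord_recr. Qed.

Lemma chu (C : numClosedFieldType) (M : C) N : forall a : C,
  \sum_(k < N.+1) ('C(N, k))%:R * (-1) ^+ k * rp M k * rp (a + k%:R) (N - k)
  = rp (a - M) N.
Proof.
elim: N => [|N IH] a.
  by rewrite big_ord_recl big_ord0 /= bin0 expr0 subn0 addr0 !rp0 !mulr1.
rewrite big_ord_recl /= bin0 expr0 subn0 addr0 rp0 !mulr1 mul1r.
rewrite (eq_bigr (fun k : 'I_N.+1 =>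
   ('C(N, k))%:R * (-1) ^+ (bump 0 k) * rp M (bump 0 k) * rp (a + (bump 0 k)%:R) (N.+1 - bump 0 k)
 + ('C(N, bump 0 k))%:R * (-1) ^+ (bump 0 k) * rp M (bump 0 k) * rp (a + (bump 0 k)%:R) (N.+1 - bump 0 k)));
  last by move=> k _; rewrite /bump /= binS natrD; ring.
rewrite big_split /= addrCA.
have EB : rp a N.+1 + \sum_(i < N.+1) ('C(N, bump 0 i))%:R * (-1) ^+ bump 0 i * rp M (bump 0 i) *
      rp (a + (bump 0 i)%:R) (N.+1 - bump 0 i)
   = \sum_(k < N.+1) ('C(N, k))%:R * (-1) ^+ k * rp M k * rp (a + k%:R) (N.+1 - k).
  pose G := fun k : nat => ('C(N, k))%:R * (-1) ^+ k * rp M k * rp (a + k%:R) (N.+1 - k).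
  have h1 : \sum_(k < N.+2) G k = G 0%N + \sum_(k < N.+1) G (bump 0 k) by rewrite big_ord_recl.
  have h2 : \sum_(k < N.+2) G k = \sum_(k < N.+1) G k + G N.+1 by rewrite big_ord_recr.
  have hG : G N.+1 = 0 by rewrite /G bin_small // !mul0r.
  rewrite hG addr0 in h2.
  have hG0 : G 0%N = rp a N.+1 by rewrite /G bin0 expr0 subn0 addr0 rp0 !mulr1 mul1r.
  rewrite hG0 in h1.
  by rewrite -h2 h1.
rewrite EB -big_split /=.
rewrite (eq_bigr (fun k : 'I_N.+1 => (a - M) *
   (('C(N, k))%:R * (-1) ^+ k * rp M k * rp (a + 1 + k%:R) (N - k)))); last first.
  move=> k _; rewrite /bump /= add1n subSS subSn; last by rewrite -ltnS.
  rewrite (rp_Sl (a + k%:R) (N - k)) (rp_Sr M k) exprS.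
  have -> : a + k.+1%:R = a + k%:R + 1 by rewrite -addn1 natrD addrA.
  have -> : a + 1 + k%:R = a + k%:R + 1 by rewrite addrAC.
  ring.
by rewrite -big_distrr /= IH rp_Sl [a + 1 - M]addrAC.
Qed.
Lemma nat_rising M k : (k`! * 'C((M + k).-1, k))%N = (\prod_(t < k) (M + t))%N.
Proof.
elim: k => [|k IH]; first by rewrite big_ord0 bin0.
rewrite big_ord_recr /= -IH addnS /= factS.
have D := mul_bin_diag (M + k) k.
rewrite -[RHS]mulnA (mulnC ('C((M + k).-1, k))) D.
by rewrite [RHS]mulnCA [RHS]mulnA.
Qed.

Lemma lsum (C : numClosedFieldType) M k0 :
  \sum_(l0 < k0.+1) ((k0.+1)`!)%:R * ((k0)`!)%:R / (((l0)`!)%:R * ((k0.+1 - l0.+1)`!)%:R)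
      * ('C(M, l0.+1))%:R
  = rp (M%:R : C) k0.+1.
Proof.
rewrite (eq_bigr (fun l0 : 'I_k0.+1 => ((k0.+1)`!)%:R * ('C(M, l0.+1) * 'C(k0, l0))%:R : C)); last first.
  move=> l0 _; rewrite subSS.
  have hl : (l0 <= k0)%N by rewrite -ltnS.
  have E := bin_fact hl.
  have h1 := fact_neq0 C l0; have h2 := fact_neq0 C (k0 - l0).
  rewrite -E !natrM; field. by rewrite h1 h2.
rewrite -big_distrr /= -natr_sum.
have V := binomial.Vandermonde M k0 k0.+1.
rewrite big_ord_recl /= subn0 (bin_small (ltnSn k0)) muln0 add0n in V.
rewrite (eq_bigr (fun l0 : 'I_k0.+1 => 'C(M, bump 0 l0) * 'C(k0, k0.+1 - bump 0 l0))%N); last first.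
  move=> l0 _; rewrite /bump /= add1n subSS bin_sub //; by rewrite -ltnS.
rewrite V -natrM.
have := nat_rising M k0.+1; rewrite addnS /= => ->.
by rewrite natr_prod /rp; apply: eq_bigr => t _; rewrite natrD.
Qed.

Definition Qp (C : numClosedFieldType) (a : C) n : C := \prod_(t < n) (a - (t.+1)%:R).

Lemma rp_Qp (C : numClosedFieldType) (a : C) n : rp (a - n%:R) n = Qp a n.
Proof.
elim: n => [|n IH]; first by rewrite rp0 /Qp big_ord0.
rewrite rp_Sl /Qp big_ord_recr /= -/(Qp a n) -IH mulrC; congr (_ * _).
by rewrite -addn1 natrD opprD addrA subrK.
Qed.

Lemma rp1a_Qp (C : numClosedFieldType) (a : C) n : rp (1 - a) n = (-1) ^+ n * Qp a n.
Proof.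
elim: n => [|n IH]; first by rewrite rp0 /Qp big_ord0 expr0 mulr1.
rewrite rp_Sr IH /Qp big_ord_recr /= -/(Qp a n) exprS -addn1 natrD; ring.
Qed.

Lemma Qp_neq0 (C : numClosedFieldType) (a : C) n :
  (forall z : int, a != z%:~R) -> Qp a n != 0.
Proof.
move=> ha; rewrite /Qp prodf_seq_neq0; apply/allP => t _ /=.
by rewrite subr_eq0; apply: (ha (Posz t.+1)).
Qed.

Lemma rp_add (C : numClosedFieldType) (x : C) p q : rp x (p + q) = rp x p * rp (x + p%:R) q.
Proof. exact: poch_add. Qed.

Lemma poch_neg (C : numClosedFieldType) (a : C) N M :
  (forall z : int, a != z%:~R) ->
  rp (1 - a) M * poch a (Posz N - Posz M) = (-1) ^+ M * rp (a - M%:R) N.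
Proof.
move=> ha; rewrite rp1a_Qp.
case: (leqP M N) => hMN.
  have -> : (Posz N - Posz M)%R = Posz (N - M) by lia.
  by rewrite -{2}(subnKC hMN) rp_add rp_Qp subrK mulrA.
have -> : (Posz N - Posz M)%R = Negz (M - N).-1 by rewrite NegzE; lia.
rewrite /poch prednK ?subn_gt0 //.
have E : Qp a M = rp (a - M%:R) N * Qp a (M - N).
  have h := rp_add (a - M%:R) N (M - N).
  rewrite (subnKC (ltnW hMN)) rp_Qp in h; rewrite h -rp_Qp natrB ?(ltnW hMN) //.
  congr (_ * rp _ _); ring.
have -> : \prod_(t < M - N) (a - (t.+1)%:R) = Qp a (M - N) by [].
by rewrite E mulrA mulfK ?Qp_neq0.
Qed.
Lemma sum2_factor (C : numClosedFieldType) (I1 I2 : finType) (P1 : pred I1) (P2 : pred I2)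
  (x : C) (F : I1 -> C) (G : I2 -> C) :
  \sum_(i | P1 i) \sum_(j | P2 j) x * F i * G j
  = x * (\sum_(i | P1 i) F i) * (\sum_(j | P2 j) G j).
Proof.
rewrite (eq_bigr (fun i => (x * F i) * \sum_(j | P2 j) G j)); last by move=> i _; rewrite mulr_sumr.
by rewrite -mulr_suml -mulr_sumr.
Qed.

Definition Tkl (C : numClosedFieldType) (a : C) N M k l : C :=
  (-1) ^+ (k + M) * (k`!)%:R * ((k.-1)`!)%:R / (((l.-1)`!)%:R * ((k - l)`!)%:R)
   * poch (a + k%:R) (Posz (N - k)).

Definition Ufac (C : numClosedFieldType) m (a : C) (b c : 'I_m -> C) (I : midx m) M : C :=
  mpoch b I / mpoch c I / poch (1 - a) (Posz M).

Lemma summand (C : numClosedFieldType) m n (a : C) (b c : 'I_m -> C) (I i : midx m)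
  (J j : midx n) k l :
  le_midx i I -> le_midx j J -> mdeg i = k -> mdeg j = l ->
  ((-1) ^+ (k + l) * (k`!)%:R * ((k.-1)`!)%:R * mpoch b i
       / (((l.-1)`!)%:R * ((k - l)`!)%:R * poch (1 - a) (Posz l) * mpoch c i)
       / mfact C i / mfact C j) *
  ((poch (a + k%:R) (Posz (mdeg (msub I i))) * mpoch (fun s => b s + (i s)%:R) (msub I i)
      / mpoch (fun s => c s + (i s)%:R) (msub I i) / mfact C (msub I i)) *
   ((-1) ^+ (mdeg (msub J j)) / poch (1 + (- a + l%:R)) (Posz (mdeg (msub J j)))
      / mfact C (msub J j)))
  = Tkl a (mdeg I) (mdeg J) k l * Ufac a b c I (mdeg J)
    * ((mfact C i)^-1 * (mfact C (msub I i))^-1)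
    * ((mfact C j)^-1 * (mfact C (msub J j))^-1).
Proof.
move=> hi hj hk hl.
have hlM : (l <= mdeg J)%N by rewrite -hl; apply: le_mdeg_sum.
rewrite !mdeg_msub // hk hl /Tkl /Ufac (mpoch_split b hi) (mpoch_split c hi).
have e1 : 1 + (- a + l%:R) = 1 - a + l%:R by rewrite addrA.
rewrite e1.
have := poch_add (1 - a) l (mdeg J - l); rewrite subnKC // => ->.
have -> : (-1) ^+ (k + mdeg J) = (-1) ^+ (k + l) * (-1) ^+ (mdeg J - l) :> C.
  by rewrite -exprD -addnA subnKC.
rewrite !invfM.
ring.
Qed.
Lemma rhs_term_E (C : numClosedFieldType) m n (a : C) (b c : 'I_m -> C) k I J :
  @rhs_term C m n a b c k I J =
  \sum_(l0 < k) Tkl a (mdeg I) (mdeg J) k l0.+1 * Ufac a b c I (mdeg J)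
     * (('C(mdeg I, k))%:R / mfact C I) * (('C(mdeg J, l0.+1))%:R / mfact C J).
Proof.
rewrite /rhs_term; apply: eq_bigr => l0 _ /=.
rewrite -(mvander C I k) -(mvander C J l0.+1) -sum2_factor.
apply: eq_bigr => ib /eqP hib; apply: eq_bigr => jb /eqP hjb.
rewrite term_coef.
case hi: (le_midx (of_bounded ib) I); case hj: (le_midx (of_bounded jb) J) => /=;
  rewrite ?mulr0 ?mul0r //.
exact: (summand a b c hi hj hib hjb).
Qed.
Lemma rhs_term_S (C : numClosedFieldType) m n (a : C) (b c : 'I_m -> C) k I J :
  @rhs_term C m n a b c k.+1 I J =
  Ufac a b c I (mdeg J) / mfact C I / mfact C J * (-1) ^+ (mdeg J) *
  (('C(mdeg I, k.+1))%:R * (-1) ^+ k.+1 * rp (a + k.+1%:R) (mdeg I - k.+1))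
  * rp ((mdeg J)%:R : C) k.+1.
Proof.
rewrite rhs_term_E -lsum mulr_sumr; apply: eq_bigr => l0 _.
rewrite /Tkl exprD /rp /=.
ring.
Qed.

Lemma rhs_zero (C : numClosedFieldType) m n (a : C) (b c : 'I_m -> C) k I J :
  (mdeg I < k.+1)%N -> @rhs_term C m n a b c k.+1 I J = 0.
Proof. by move=> h; rewrite rhs_term_S bin_small // !mul0r mulr0 mul0r. Qed.

Lemma main_coef (C : numClosedFieldType) m n (a : C) (b c : 'I_m -> C) I J :
  (forall z : int, a != z%:~R) ->
  \sum_(k < mdeg I) @rhs_term C m n a b c k.+1 I J =
  @HA C m n a b c I J - fps_mul (@FA C m n a b c) (@BesselJ C m n (- a)) I J.
Proof.
move=> ha.
set N := mdeg I; set M := mdeg J.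
rewrite (eq_bigr (fun k : 'I_N => Ufac a b c I M / mfact C I / mfact C J * (-1) ^+ M *
  (('C(N, k.+1))%:R * (-1) ^+ k.+1 * rp (M%:R : C) k.+1 * rp (a + k.+1%:R) (N - k.+1))));
  last first.
  by move=> k _; rewrite rhs_term_S; rewrite -/N -/M; ring.
rewrite -mulr_sumr.
have h : \sum_(k < N) ('C(N, k.+1))%:R * (-1) ^+ k.+1 * rp (M%:R : C) k.+1 * rp (a + k.+1%:R) (N - k.+1)
   = rp (a - M%:R) N - rp a N.
  rewrite -(chu (M%:R : C) N a) big_ord_recl /= bin0 expr0 rp0 subn0 addr0 !mulr1 mul1r.
  by rewrite addrAC subrr add0r.
rewrite h FJ_coef /HA -/N -/M.
have hP : rp (1 - a) M != 0.
  by rewrite rp1a_Qp mulf_neq0 ?Qp_neq0 // signr_eq0.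
have E := poch_neg N M ha.
have -> : poch a (Posz N - Posz M) = (rp (1 - a) M)^-1 * ((-1) ^+ M * rp (a - M%:R) N).
  by rewrite -E mulrA mulVf // mul1r.
rewrite /Ufac.
have -> : poch (1 - a) (Posz M) = rp (1 - a) M by [].
have -> : poch a (Posz N) = rp a N by [].
ring.
Qed.

Lemma sum_stable (C : numClosedFieldType) m n (a : C) (b c : 'I_m -> C) I J d :
  \sum_(k < mdeg I + d) @rhs_term C m n a b c k.+1 I J =
  \sum_(k < mdeg I) @rhs_term C m n a b c k.+1 I J.
Proof.
elim: d => [|d IH]; first by rewrite addn0.
by rewrite addnS big_ord_recr /= IH rhs_zero ?addr0 // ltnS leq_addr.
Qed.

Unset Implicit Arguments.

Theorem mainTheorem15 (C : numClosedFieldType) (m n : nat) (a : C)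
  (b c : 'I_m -> C)
  (ha : forall z : int, a != z%:~R)
  (hc : forall (s : 'I_m) (t : nat), c s != - t%:R) :
  exists S : fps C m n,
    fps_hasSum (fun k => @rhs_term C m n a b c k.+1) S /\
    @HA C m n a b c =
      fps_add (fps_mul (@FA C m n a b c) (@BesselJ C m n (- a))) S.
Proof.
exists (fun I J => @HA C m n a b c I J - fps_mul (@FA C m n a b c) (@BesselJ C m n (- a)) I J).
split.
  move=> I J; exists (mdeg I) => N hN.
  by rewrite -(subnKC hN) sum_stable main_coef.
apply: functional_extensionality => I; apply: functional_extensionality => J.
by rewrite /fps_add addrC subrK.
Qed.
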